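(* Let $A$ be an abelian group and $B$ a subgroup of $A$ such that $A/B$ is finite and $l$-torsion. Let $R = \mathbb{Z}[1/l]$ and let $M$ be an $RA$-module. Then for every $n \ge 0$ the natural maps \[ H_n(A, M_B) \to H_n(A, M_A), \qquad H^n(A, M^A) \to H^n(A, M^B) \] are isomorphisms.
   Context: For a group $G$ and a $G$-module $M$, $M_G := M/\langle m - gm \mid g \in G, m \in M\rangle$ (coinvariants) and $M^G := \{m \in M \mid gm = m \ \forall g\in G\}$ (invariants). Since $A$ is abelian, $M_B$ and $M^B$ are $A$-modules, and the maps above are induced by the natural $A$-module maps $M_B \to M_A$ and $M^A \to M^B$. Here $l$ is a positive integer and an abelian group is $l$-torsion if every element is annihilated by $l$. *)

(* Defs.v *)
(* Group (co)homology of an abelian group A (written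
   additively as a zmodType) with coefficients in an A-module M, computed
   from the standard inhomogeneous bar complex. *)
From HB Require Import structures.
From mathcomp Require Import all_boot all_order all_algebra.
Set Implicit Arguments. Unset Strict Implicit. Unset Printing Implicit Defensive.
Import GRing.Theory.
Local Open Scope ring_scope.

Section BarComplex.
Variables (A M : zmodType) (act : A -> M -> M).

Definition merge_at (i : nat) (x : seq A) : seq A :=
  take i x ++ (nth 0 x i + nth 0 x i.+1) :: drop i.+2 x.

Definition sgn (k : nat) (m : M) : M := if odd k then - m else m.

(* A chain is a finite formal sum, represented by a list of terms; its value
   is the finitely supported function (seq A) -> M it defines. *)
Definition eval_ch (c : seq (seq A * M)) (y : seq A) : M :=
  \sum_(p <- c | p.1 == y) p.2.

Definition chain_deg (n : nat) (c : seq (seq A * M)) : bool :=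
  all (fun p => size p.1 == n) c.

(* d(m[x_1|..|x_n]) = x_1^{-1} m [x_2|..|x_n]
      + sum_{i=1}^{n-1} (-1)^i m[..|x_i x_{i+1}|..] + (-1)^n m[x_1|..|x_{n-1}] *)
Definition bd_term (p : seq A * M) : seq (seq A * M) :=
  let x := p.1 in let m := p.2 in
  match size x with
  | 0 => [::]
  | n.+1 =>
      (behead x, act (- head 0 x) m)
        :: [seq (merge_at i x, sgn i.+1 m) | i <- iota 0 n]
        ++ [:: (take n x, sgn n.+1 m)]
  end.

Definition bd (c : seq (seq A * M)) : seq (seq A * M) := flatten (map bd_term c).

(* Homology with coefficients in M/D (D an A-submodule, given as a predicate):
   relative cycles and boundaries modulo D. *)
Definition rel_cycle (D : M -> Prop) (n : nat) (c : seq (seq A * M)) : Prop :=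
  chain_deg n c /\ forall y, D (eval_ch (bd c) y).

Definition bdry_mod (D : M -> Prop) (n : nat) (c : seq (seq A * M)) : Prop :=
  exists e, chain_deg n.+1 e /\ forall y, D (eval_ch c y - eval_ch (bd e) y).

(* The map H_n(A, M/D1) -> H_n(A, M/D2) induced by the projection
   M/D1 -> M/D2 (for D1 <= D2) is bijective. *)
Definition homology_map_iso (D1 D2 : M -> Prop) (n : nat) : Prop :=
  (forall c, rel_cycle D1 n c -> bdry_mod D2 n c -> bdry_mod D1 n c) /\
  (forall c, rel_cycle D2 n c ->
     exists c', rel_cycle D1 n c' /\
       exists e, chain_deg n.+1 e /\
         forall y, D2 (eval_ch c y - eval_ch c' y - eval_ch (bd e) y)).

(* (df)(x_1,..,x_{n+1}) = x_1 f(x_2,..) + sum_{i=1}^n (-1)^i f(..,x_i x_{i+1},..)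
                          + (-1)^{n+1} f(x_1,..,x_n) *)
Definition dco (f : seq A -> M) (x : seq A) : M :=
  let n := (size x).-1 in
  act (head 0 x) (f (behead x))
  + \sum_(i < n) sgn i.+1 (f (merge_at i x))
  + sgn n.+1 (f (take n x)).

Definition valued_in (P : M -> Prop) (n : nat) (f : seq A -> M) : Prop :=
  forall x, size x = n -> P (f x).

Definition cocycle (n : nat) (f : seq A -> M) : Prop :=
  forall x, size x = n.+1 -> dco f x = 0.

Definition cobdry (P : M -> Prop) (n : nat) (f : seq A -> M) : Prop :=
  match n with
  | 0 => forall x, size x = 0 -> f x = 0
  | k.+1 => exists g, valued_in P k g /\ forall x, size x = k.+1 -> f x = dco g x
  end.

(* The map H^n(A, P1) -> H^n(A, P2) induced by the inclusion P1 <= P2 of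
   A-submodules of M is bijective. *)
Definition cohomology_map_iso (P1 P2 : M -> Prop) (n : nat) : Prop :=
  (forall f, valued_in P1 n f -> cocycle n f -> cobdry P2 n f -> cobdry P1 n f) /\
  (forall f, valued_in P2 n f -> cocycle n f ->
     exists f', valued_in P1 n f' /\ cocycle n f' /\
                cobdry P2 n (fun x => f x - f' x)).

(* the subgroup <m - b m | b in B, m in M>, so that M_B = M / coinv_rel B *)
Definition coinv_rel (B : pred A) (x : M) : Prop :=
  exists s : seq (A * M), all (fun p => p.1 \in B) s /\
                          x = \sum_(p <- s) (p.2 - act p.1 p.2).

Definition invariants (B : pred A) (m : M) : Prop :=
  forall b, b \in B -> act b m = m.

End BarComplex.

(* Main.v *)
Require Import Defs.
From HB Require Import structures.
From mathcomp Require Import all_boot all_order all_algebra.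
From mathcomp Require Import zify.
From Stdlib Require Import Lia FunctionalExtensionality.
Import GRing.Theory.
Local Open Scope ring_scope.

Lemma zlem_ (V : zmodType) (t s r r' : V) : s = - t -> r = s + r' -> r' = 0 -> t + r = 0.
Proof. by move=> -> -> ->; rewrite addr0 subrr. Qed.
Lemma zpl3_ (V : zmodType) (h r0 s r1 : V) : r0 = s + r1 -> h + r0 = s + (h + r1).
Proof. by move=> ->; rewrite addrCA. Qed.

Ltac zpull :=
  first [ exact: erefl
        | apply: addrC
        | (apply: zpl3_; zpull) ].

Ltac zcancel :=
  match goal with
  | |- 0 = 0 => reflexivity
  | |- ?t + ?r = 0 => 
      let s := match t with - ?u => u | _ => constr:(- t) end in
      first [ (apply: (@zlem_ _ t s r 0); [ first [exact: erefl | by rewrite opprK] | by rewrite addr0 | reflexivity ])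
            | (apply: (@zlem_ _ t s); [ first [exact: erefl | by rewrite opprK] | zpull | zcancel ]) ]
  end.

Ltac zsolve :=
  apply/eqP; rewrite -subr_eq0; apply/eqP; rewrite ?opprD ?opprK -?addrA ?addr0 ?add0r;
  zcancel.

Section Comb.
Variables (A M : zmodType) (a : A).

Fixpoint Tr (f : seq A -> M) (x : seq A) {struct x} : M :=
  match x with
  | [::] => 0
  | u :: y => match y with
              | [::] => - f [::]
              | v :: z => - f ((u + v) :: z) - Tr (fun w => f (u :: w)) y
              end
  end.

Fixpoint Hr (f : seq A -> M) (x : seq A) {struct x} : M :=
  match x with
  | [::] => f [:: a]
  | u :: y => f (a :: x) - Hr (fun w => f (u :: w)) y
  end.

Definition Ps (psi : A -> M -> M) (f : seq A -> M) (x : seq A) : M :=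
  match x with [::] => 0 | u :: y => psi u (f y) end.

Definition Dr (psi : A -> M -> M) (f : seq A -> M) (x : seq A) : M :=
  match x with [::] => 0 | u :: y => psi u (f y) + Tr f x end.

Lemma Hr_ext f g x : (forall w, size w = (size x).+1 -> f w = g w) -> Hr f x = Hr g x.
Proof.
elim: x f g => [|u y IH] f g H /=; first by rewrite H.
rewrite H //; congr (_ - _); apply: IH => w Hw; apply: H; by rewrite /= Hw.
Qed.

Lemma add_fun0 (phi : M -> M) : (forall m1 m2, phi (m1 + m2) = phi m1 + phi m2) -> phi 0 = 0.
Proof. move=> H; have h := H 0 0; rewrite addr0 in h; apply: (addrI (phi 0)); by rewrite -h addr0. Qed.

Lemma add_funN (phi : M -> M) : (forall m1 m2, phi (m1 + m2) = phi m1 + phi m2) ->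
  forall m, phi (- m) = - phi m.
Proof. move=> H m; apply: (addrI (phi m)); by rewrite -H !subrr (add_fun0 _ H). Qed.

Lemma Hr_morph (phi : M -> M) f x :
  (forall m1 m2, phi (m1 + m2) = phi m1 + phi m2) ->
  Hr (fun w => phi (f w)) x = phi (Hr f x).
Proof.
move=> Hphi.
elim: x f => [|u y IH] f //=.
by rewrite (IH (fun w => f (u :: w))) Hphi (add_funN _ Hphi).
Qed.

Lemma Hr_add f g x : Hr (fun w => f w + g w) x = Hr f x + Hr g x.
Proof.
elim: x f g => [|u y IH] f g //=.
by rewrite IH opprD addrACA.
Qed.

Lemma Hr_opp f x : Hr (fun w => - f w) x = - Hr f x.
Proof. by elim: x f => [|u y IH] f //=; rewrite IH opprD. Qed.

Lemma Tr_add f g x : Tr (fun w => f w + g w) x = Tr f x + Tr g x.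
Proof.
elim: x f g => [|u y IH] f g /=; first by rewrite addr0.
case: y IH => [|v z] IH; first by rewrite opprD.
by rewrite IH !opprD addrACA.
Qed.

Lemma Tr_opp f x : Tr (fun w => - f w) x = - Tr f x.
Proof.
elim: x f => [|u y IH] f /=; first by rewrite oppr0.
by case: y IH => [|v z] IH //; rewrite IH opprD.
Qed.

Lemma Hr_Ps psi f x : (forall u m1 m2, psi u (m1 + m2) = psi u m1 + psi u m2) ->
  Hr (Ps psi f) x + Ps psi (Hr f) x = psi a (f x).
Proof.
move=> Hpsi; case: x => [|u y] /=; first by rewrite addr0.
have -> : Hr (fun w => Ps psi f (u :: w)) y = psi u (Hr f y).
  by rewrite -Hr_morph.
by rewrite subrK.
Qed.

Lemma HrE f u y : Hr f (u :: y) = f (a :: u :: y) - Hr (fun w => f (u :: w)) y.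
Proof. by []. Qed.
Lemma TrE f u v z : Tr f (u :: v :: z) = - f ((u + v) :: z) - Tr (fun w => f (u :: w)) (v :: z).
Proof. by []. Qed.

Lemma Hr_Tr f x : Hr (Tr f) x + Tr (Hr f) x = - f x.
Proof.
elim: x f => [|u y IH] f; first by rewrite /= addr0.
case: y IH => [|v z] IH.
  by rewrite /= (addrC u a); zsolve.
set y := v :: z.
have E1 : Hr (fun w => Tr f (u :: w)) y =
          Hr (fun w => - f ((u + head 0 w) :: behead w)) y - Hr (Tr (fun w => f (u :: w))) y.
  rewrite -Hr_opp -Hr_add; apply: Hr_ext => -[|w0 w] //=.
have E2 : Hr (fun w => - f ((u + head 0 w) :: behead w)) y =
          - f ((u + a) :: y) + Hr (fun w => f ((u + v) :: w)) z.
  by rewrite HrE /= Hr_opp opprK.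
have E4 : Tr (fun w => Hr f (u :: w)) y =
          Tr (fun w => f (a :: u :: w)) y - Tr (Hr (fun w => f (u :: w))) y.
  by rewrite -Tr_opp -Tr_add.
have := IH (fun w => f (u :: w)); rewrite -/y => IHu.
rewrite HrE /y TrE -/y E1 E2.
rewrite /y [Tr (Hr f) _]TrE -/y E4 -{}IHu.
rewrite /y [Tr (fun w => f (a :: w)) _]TrE -/y.
rewrite [Hr f _]HrE.
cbv beta.
rewrite (addrC u a).
by zsolve.
Qed.

Lemma Dr_split psi f x : Dr psi f x = Ps psi f x + Tr f x.
Proof. by case: x => [|u y] //=; rewrite addr0. Qed.


Lemma homotopy psi f x : (forall u m1 m2, psi u (m1 + m2) = psi u m1 + psi u m2) ->
  Dr psi (Hr f) x + Hr (Dr psi f) x = psi a (f x) - f x.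
Proof.
move=> Hpsi.
have -> : Hr (Dr psi f) x = Hr (Ps psi f) x + Hr (Tr f) x.
  rewrite -Hr_add; apply: Hr_ext => w _; exact: Dr_split.
rewrite Dr_split.
have := Hr_Ps psi f x Hpsi; have := Hr_Tr f x.
move=> h1 h2; rewrite -h2 -h1.
zsolve.
Qed.

Lemma Hr_zero f x : (forall w, size w = (size x).+1 -> f w = 0) -> Hr f x = 0.
Proof.
elim: x f => [|u y IH] f H /=; first by rewrite H.
rewrite H // IH ?subr0 // => w Hw; apply: H; by rewrite /= Hw.
Qed.

Lemma Hr_closed (P : M -> Prop) f x : P 0 -> (forall m1 m2, P m1 -> P m2 -> P (m1 - m2)) ->
  (forall w, size w = (size x).+1 -> P (f w)) -> P (Hr f x).
Proof.
move=> P0 PB.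
elim: x f => [|u y IH] f H /=; first by apply: H.
apply: PB; first by apply: H.
apply: IH => w Hw; apply: H; by rewrite /= Hw.
Qed.

Lemma Dr_opp psi f x : (forall u m1 m2, psi u (m1 + m2) = psi u m1 + psi u m2) ->
  Dr psi (fun w => - f w) x = - Dr psi f x.
Proof.
move=> Hpsi; case: x => [|u y]; first by rewrite /= oppr0.
rewrite /Dr (add_funN _ (Hpsi u)) Tr_opp; exact: esym (opprD _ _).
Qed.

Lemma sgnS k (m : M) : sgn k.+1 m = - sgn k m.
Proof. by rewrite /sgn /=; case: (odd k); rewrite ?opprK. Qed.

Lemma sgnN k (m : M) : sgn k (- m) = - sgn k m.
Proof. by rewrite /sgn; case: (odd k). Qed.

Lemma sgnD k (m1 m2 : M) : sgn k (m1 + m2) = sgn k m1 + sgn k m2.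
Proof. by rewrite /sgn; case: (odd k); rewrite ?opprD. Qed.

Lemma sgn0 k : sgn k (0 : M) = 0.
Proof. by rewrite /sgn; case: (odd k); rewrite ?oppr0. Qed.

Lemma sgn_fun (phi : M -> M) k m : (forall m1 m2, phi (m1 + m2) = phi m1 + phi m2) ->
  phi (sgn k m) = sgn k (phi m).
Proof. by move=> H; rewrite /sgn; case: (odd k); rewrite ?(add_funN _ H). Qed.

Lemma Tr_idx f u y :
  \sum_(i < size y) sgn i.+1 (f (merge_at i (u :: y))) + sgn (size y).+1 (f (take (size y) (u :: y)))
  = Tr f (u :: y).
Proof.
elim: y u f => [|v z IH] u f.
  by rewrite big_ord0 add0r.
rewrite TrE -(IH v (fun w => f (u :: w))).
change (size (v :: z)) with (size z).+1.
rewrite big_ord_recl.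
rewrite (_ : merge_at ord0 [:: u, v & z] = (u + v) :: z); last by rewrite /merge_at /= drop0.
rewrite [take _ [:: u, v & z]]/=.
have -> : \sum_(i < size z) sgn (lift ord0 i).+1 (f (merge_at (lift ord0 i) [:: u, v & z])) =
          - \sum_(i < size z) sgn i.+1 (f (u :: merge_at i (v :: z))).
  rewrite -sumrN; apply: eq_bigr => i _.
  rewrite (_ : merge_at (lift ord0 i) [:: u, v & z] = u :: merge_at i (v :: z)); last by reflexivity.
  by rewrite /= /bump /= sgnS.
rewrite [sgn (size z).+2 _]sgnS [sgn 1 _]/sgn /=.
by zsolve.
Qed.

Definition ins (i : nat) (x : seq A) := take i x ++ a :: drop i x.

Lemma size_ins i x : size (ins i x) = (size x).+1.
Proof.
rewrite /ins size_cat /= size_drop size_take.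
case: ltnP => h; lia.
Qed.

Lemma Hr_idx f x : \sum_(i <- iota 0 (size x).+1) sgn i (f (ins i x)) = Hr f x.
Proof.
elim: x f => [|u y IH] f.
  by rewrite /= big_cons big_nil addr0.
rewrite HrE -IH.
change (iota 0 (size (u :: y)).+1) with (0%N :: iota (1 + 0) (size y).+1).
rewrite big_cons iotaDl big_map.
rewrite (_ : ins 0 (u :: y) = a :: u :: y); last by reflexivity.
rewrite [sgn 0 _]/sgn /=; congr (_ + _).
rewrite -sumrN; apply: eq_bigr => i _.
rewrite add1n sgnS; congr (- sgn _ _).

Qed.

End Comb.
Arguments Tr {A M}.
Arguments Hr {A M}.
Arguments Dr {A M}.
Arguments Ps {A M}.
Arguments ins {A}.


Section Main.
Variables (A M : zmodType) (act : A -> M -> M) (B : pred A) (l : nat) (inv : M -> M) (s : seq A).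
Hypotheses (B0 : 0 \in B) (BB : forall x y, x \in B -> y \in B -> x - y \in B)
 (Hs : forall a, exists2 b, b \in s & a - b \in B) (Hl : forall a, a *+ l \in B)
 (invK : forall m, inv (m *+ l) = m) (Kinv : forall m, (inv m) *+ l = m)
 (actD : forall a x y, act a (x + y) = act a x + act a y) (act0 : forall x, act 0 x = x)
 (actM : forall a b x, act (a + b) x = act a (act b x)).

Definition goodop (phi : M -> M) :=
  (forall x y, phi (x + y) = phi x + phi y) /\ (forall b m, phi (act b m) = act b (phi m)).

Lemma act_comm a b m : act a (act b m) = act b (act a m).
Proof. by rewrite -!actM addrC. Qed.

Lemma actN a m : act a (- m) = - act a m.
Proof. exact: add_funN. Qed.

Lemma act_0 a : act a 0 = 0.
Proof. exact: add_fun0. Qed.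

Lemma goodop_act c : goodop (act c).
Proof. split => [x y|b m]; [exact: actD | exact: act_comm]. Qed.

Lemma phi_sum (phi : M -> M) : (forall x y, phi (x + y) = phi x + phi y) ->
  forall (I : Type) (r : seq I) (P : pred I) (F : I -> M),
  phi (\sum_(i <- r | P i) F i) = \sum_(i <- r | P i) phi (F i).
Proof. move=> H I r P F; apply: (big_morph phi H); exact: add_fun0. Qed.

Lemma goodop_inv : goodop inv.
Proof.
have injl : injective (fun m : M => m *+ l) by apply: (can_inj invK).
split => [x y|b m]; apply: injl => /=.
  by rewrite mulrnDl !Kinv.
rewrite Kinv.
have -> : act b (inv m) *+ l = act b (inv m *+ l).
  elim: l => [|k IH]; first by rewrite !mulr0n act_0.
  by rewrite !mulrSr actD IH.
by rewrite Kinv.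
Qed.

Lemma goodop_comp phi psi : goodop phi -> goodop psi -> goodop (fun m => phi (psi m)).
Proof.
move=> [p1 p2] [q1 q2]; split => [x y|b m]; first by rewrite q1 p1.
by rewrite q2 p2.
Qed.

Lemma goodop_opp : goodop (fun m => - m).
Proof. split => [x y|b m]; [exact: opprD | by rewrite actN]. Qed.

Definition Sop (r : A) (k : nat) (m : M) := \sum_(j < k) act (r *+ j) m.
Definition Qop (r : A) (m : M) := inv (Sop r l m).
Definition Pl (t : seq A) (m : M) := foldr (fun r m' => Qop r m') m t.

Lemma goodop_S r k : goodop (Sop r k).
Proof.
split => [x y|b m]; rewrite /Sop.
  rewrite -big_split; apply: eq_bigr => j _; exact: actD.
rewrite (phi_sum _ (actD b)); apply: eq_bigr => j _; exact: act_comm.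
Qed.

Lemma goodop_Q r : goodop (Qop r).
Proof. have := goodop_comp _ _ goodop_inv (goodop_S r l); by []. Qed.

Lemma goodop_P t : goodop (Pl t).
Proof.
elim: t => [|r t IH]; first by split.
have := goodop_comp _ _ (goodop_Q r) IH; by [].
Qed.

Section CR.
Variable C : pred A.
Let D := coinv_rel act C.

Lemma D0 : D 0.
Proof. by exists [::]; rewrite big_nil. Qed.

Lemma DD x y : D x -> D y -> D (x + y).
Proof.
move=> [s1 [h1 ->]] [s2 [h2 ->]]; exists (s1 ++ s2); split; first by rewrite all_cat h1 h2.
by rewrite big_cat.
Qed.

Lemma Dop phi x : goodop phi -> D x -> D (phi x).
Proof.
move=> [p1 p2] [s1 [h1 ->]]; exists [seq (p.1, phi p.2) | p <- s1]; split.
  by rewrite all_map.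
rewrite big_map (phi_sum _ p1); apply: eq_bigr => p _ /=.
by rewrite p1 (add_funN _ _ p1) p2.
Qed.

Lemma DN x : D x -> D (- x).
Proof. by move=> h; apply: Dop h; exact: goodop_opp. Qed.

Lemma DB x y : D x -> D y -> D (x - y).
Proof. by move=> hx hy; apply: DD => //; apply: DN. Qed.

Lemma Dsum (I : Type) (r : seq I) (P : pred I) (F : I -> M) :
  (forall i, P i -> D (F i)) -> D (\sum_(i <- r | P i) F i).
Proof. move=> H; apply: big_ind => //; [exact: D0 | exact: DD]. Qed.

Lemma Dgen b m : b \in C -> D (m - act b m).
Proof. move=> hb; exists [:: (b, m)]; split; first by rewrite /= hb. by rewrite big_seq1. Qed.

Lemma Dsgn k x : D x -> D (sgn k x).
Proof. by rewrite /sgn; case: (odd k) => // ?; apply: DN. Qed.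

End CR.

Section IC.
Variable C : pred A.
Let I := invariants act C.
Lemma I0 : I 0. Proof. by move=> b _; rewrite act_0. Qed.
Lemma Iop phi x : goodop phi -> I x -> I (phi x).
Proof. by move=> [p1 p2] hx b hb; rewrite -p2 hx. Qed.
Lemma IB x y : I x -> I y -> I (x - y).
Proof. by move=> hx hy b hb; rewrite actD actN hx ?hy. Qed.
Lemma IAdd x y : I x -> I y -> I (x + y).
Proof. by move=> hx hy b hb; rewrite actD hx ?hy. Qed.
End IC.

Lemma BN x : x \in B -> - x \in B.
Proof. by move=> h; rewrite -sub0r; apply: BB. Qed.

Lemma tele (u : nat -> M) n : \sum_(j < n) (u j - u j.+1) = u 0%N - u n.
Proof.
elim: n => [|n IH]; first by rewrite big_ord0 subrr.
by rewrite big_ord_recr /= IH addrA subrK.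
Qed.

Lemma act_mulS r j m : act (r *+ j) (act r m) = act (r *+ j.+1) m.
Proof. by rewrite -actM mulrSr. Qed.

Lemma S_tele r m : Sop r l m - act r (Sop r l m) = m - act (r *+ l) m.
Proof.
have [g1 g2] := goodop_S r l.
rewrite -g2 /Sop -sumrB.
rewrite (eq_bigr (fun j : 'I_l => act (r *+ j) m - act (r *+ j.+1) m)).
  by rewrite (tele (fun j => act (r *+ j) m)) mulr0n act0.
by move=> j _; rewrite act_mulS.
Qed.

Lemma K1 r m : coinv_rel act B (Qop r (m - act r m)).
Proof.
have [g1 g2] := goodop_S r l.
rewrite /Qop g1 (add_funN _ _ g1) g2 S_tele.
by apply: Dop; [exact: goodop_inv | apply: Dgen].
Qed.

Lemma K2aux t r m : r \in t -> coinv_rel act B (Pl t (m - act r m)).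
Proof.
elim: t => [|r0 t IH] //; rewrite inE => /orP [/eqP -> | hr] /=.
  have [p1 p2] := goodop_P t.
  by rewrite p1 (add_funN _ _ p1) p2; apply: K1.
by apply: Dop; [exact: goodop_Q | apply: IH].
Qed.

Lemma K2 m : coinv_rel act predT m -> coinv_rel act B (Pl s m).
Proof.
have [p1 p2] := goodop_P s.
move=> [s0 [_ ->]]; rewrite (phi_sum _ p1); apply: Dsum => p _.
have [r hr hb] := Hs p.1.
have -> : act p.1 p.2 = act (p.1 - r) (act r p.2) by rewrite -actM subrK.
rewrite (_ : p.2 - act (p.1 - r) (act r p.2) = (p.2 - act r p.2) + (act r p.2 - act (p.1 - r) (act r p.2))); last first.
  by rewrite addrA subrK.
rewrite p1; apply: DD; first exact: K2aux.
rewrite p1 (add_funN _ _ p1) [Pl s (act (p.1 - r) _)]p2; exact: (Dgen _ _ _ hb).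
Qed.

Lemma K3 t m : coinv_rel act predT (Pl t m - m).
Proof.
elim: t => [|r t IH] /=; first by rewrite subrr; apply: D0.
rewrite -[X in X - m](subrK (Pl t m)) -addrA; apply: DD => //.
set y := Pl t m.
rewrite /Qop -{2}(invK y) -(add_funN _ _ goodop_inv.1) -goodop_inv.1.
apply: Dop; first exact: goodop_inv.
have -> : y *+ l = \sum_(j < l) y by rewrite sumr_const card_ord.
rewrite /Sop -sumrB; apply: Dsum => j _.
rewrite -opprB; apply: DN; exact: Dgen.
Qed.

Lemma K4aux r y : invariants act B y -> act r (Qop r y) = Qop r y.
Proof.
move=> hy; rewrite /Qop -goodop_inv.2; congr (inv _).
apply/eqP; rewrite eq_sym -subr_eq0 S_tele hy ?subrr //.
Qed.

Lemma K4 m : invariants act B m -> invariants act predT (Pl s m).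
Proof.
move=> hm.
have hP : forall t, invariants act B (Pl t m) by move=> t; apply: Iop => //; exact: goodop_P.
have key : forall t r, r \in t -> act r (Pl t m) = Pl t m.
  elim=> [|r0 t IH] r //; rewrite inE => /orP [/eqP -> | hr] /=.
    exact: K4aux.
  by rewrite -(goodop_Q r0).2 IH.
move=> a _.
have [r hr hb] := Hs a.
by rewrite -(subrK r a) actM key // hP.
Qed.

Lemma K5 t m : invariants act predT m -> Pl t m = m.
Proof.
move=> hm; elim: t => [|r t IH] //=; rewrite IH /Qop /Sop.
rewrite (eq_bigr (fun _ => m)); last by move=> j _; rewrite hm.
by rewrite sumr_const card_ord invK.
Qed.


Lemma dco_cons f u y : dco act f (u :: y) = Dr act f (u :: y).
Proof.
rewrite /dco /Dr; change ((size (u :: y)).-1) with (size y).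
by rewrite -addrA Tr_idx.
Qed.

Lemma dco_map phi f x : goodop phi -> dco act (fun w => phi (f w)) x = phi (dco act f x).
Proof.
move=> [p1 p2]; rewrite /dco !p1 p2 (phi_sum _ p1) (sgn_fun _ _ _ _ p1); congr (_ + _ + _).
by apply: eq_bigr => i _; rewrite (sgn_fun _ _ _ _ p1).
Qed.

Lemma dco_add g1 g2 x : dco act (fun w => g1 w + g2 w) x = dco act g1 x + dco act g2 x.
Proof.
rewrite /dco actD sgnD.
rewrite (eq_bigr (fun i : 'I__ => sgn i.+1 (g1 (merge_at i x)) + sgn i.+1 (g2 (merge_at i x)))); last first.
  by move=> i _; rewrite sgnD.
by rewrite big_split /=; zsolve.
Qed.

Lemma dco_zero x : dco act (fun _ => 0) x = 0.
Proof.
rewrite /dco act_0 sgn0 big1 ?add0r ?addr0 // => i _; exact: sgn0.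
Qed.

Definition csim k (f1 f2 : seq A -> M) :=
  exists g, valued_in (invariants act B) k g /\
            forall x, size x = k.+1 -> f1 x - f2 x = dco act g x.

Lemma csim_refl k f : csim k f f.
Proof.
exists (fun _ => 0); split; first by move=> x _; exact: I0.
by move=> x _; rewrite subrr dco_zero.
Qed.

Lemma csim_trans k f1 f2 f3 : csim k f1 f2 -> csim k f2 f3 -> csim k f1 f3.
Proof.
move=> [g1 [v1 e1]] [g2 [v2 e2]]; exists (fun w => g1 w + g2 w); split.
  move=> x hx; apply: IAdd; [exact: v1 | exact: v2].
move=> x hx; rewrite dco_add -e1 // -e2 //.
by rewrite addrA subrK.
Qed.

Lemma csim_add k f1 f2 f3 f4 : csim k f1 f2 -> csim k f3 f4 ->
  csim k (fun x => f1 x + f3 x) (fun x => f2 x + f4 x).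
Proof.
move=> [g1 [v1 e1]] [g2 [v2 e2]]; exists (fun w => g1 w + g2 w); split.
  move=> x hx; apply: IAdd; [exact: v1 | exact: v2].
move=> x hx; rewrite dco_add -e1 // -e2 //.
by rewrite opprD addrACA.
Qed.

Lemma csim_map k phi f1 f2 : goodop phi -> csim k f1 f2 ->
  csim k (fun x => phi (f1 x)) (fun x => phi (f2 x)).
Proof.
move=> hphi [g [v e]]; exists (fun w => phi (g w)); split.
  by move=> x hx; apply: Iop => //; exact: v.
move=> x hx; rewrite dco_map // -e //.
by rewrite hphi.1 (add_funN _ _ hphi.1).
Qed.

Lemma csim_ext k f1 f2 f1' f2' : csim k f1 f2 -> (forall x, f1 x = f1' x) -> (forall x, f2 x = f2' x) ->
  csim k f1' f2'.
Proof. by move=> [g [v e]] h1 h2; exists g; split => // x hx; rewrite -h1 -h2 e. Qed.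

Lemma csim_act k b f : valued_in (invariants act B) k.+1 f -> cocycle act k.+1 f ->
  csim k (fun x => act b (f x)) f.
Proof.
move=> hv hc; exists (Hr b f); split.
  move=> y hy; apply: Hr_closed; [exact: I0 | move=> m1 m2; exact: IB |].
  by move=> w hw; apply: hv; rewrite hw hy.
case=> [|u y] // hx.
have := homotopy _ _ b act f (u :: y) actD.
rewrite dco_cons.
rewrite (Hr_zero _ _ b (Dr act f)) ?addr0 // => w hw.
case: w hw => [|w0 w] // hw; rewrite -dco_cons; apply: hc.
by rewrite hw hx.
Qed.

Lemma csim_S k r f : valued_in (invariants act B) k.+1 f -> cocycle act k.+1 f ->
  forall j, csim k (fun x => Sop r j (f x)) (fun x => f x *+ j).
Proof.
move=> hv hc; elim=> [|j IH].
  apply: csim_ext; first exact: (csim_refl k (fun _ => 0)).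
    by move=> x; rewrite /Sop big_ord0.
  by move=> x; rewrite mulr0n.
apply: csim_ext; first exact: (csim_add _ _ _ _ _ IH (csim_act _ (r *+ j) _ hv hc)).
  by move=> x; rewrite /Sop big_ord_recr.
by move=> x; rewrite mulrSr.
Qed.

Lemma cocycle_map k phi f : goodop phi -> cocycle act k f -> cocycle act k (fun x => phi (f x)).
Proof. by move=> hphi hc x hx; rewrite dco_map // hc // (add_fun0 _ _ hphi.1). Qed.

Lemma csim_P k t f : valued_in (invariants act B) k.+1 f -> cocycle act k.+1 f ->
  csim k (fun x => Pl t (f x)) f.
Proof.
elim: t f => [|r t IH] f hv hc /=; first exact: csim_refl.
apply: (csim_trans _ _ (fun x => Pl t (f x))); last exact: IH.
have hv' : valued_in (invariants act B) k.+1 (fun x => Pl t (f x)).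
  by move=> x hx; apply: Iop; [exact: goodop_P | exact: hv].
have hc' := cocycle_map _ _ _ (goodop_P t) hc.
apply: csim_ext; first exact: (csim_map _ _ _ _ goodop_inv (csim_S _ r _ hv' hc' l)).
  by [].
move=> x; exact: invK.
Qed.


Definition pair (c : seq (seq A * M)) (Phi : seq A -> M -> M) := \sum_(p <- c) Phi p.1 p.2.
Definition delta (y : seq A) (x : seq A) (m : M) := if x == y then m else 0.
Definition mapc (phi : M -> M) (c : seq (seq A * M)) := [seq (p.1, phi p.2) | p <- c].
Definition hterm (b : A) (p : seq A * M) :=
  [seq (ins b i p.1, sgn i p.2) | i <- iota 0 (size p.1).+1].
Definition hc (b : A) (c : seq (seq A * M)) := flatten (map (hterm b) c).
Definition Dc (Phi : seq A -> M -> M) (x : seq A) (m : M) := pair (bd_term act (x, m)) Phi.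
Definition Hc (b : A) (Phi : seq A -> M -> M) (x : seq A) (m : M) := pair (hterm b (x, m)) Phi.
Definition actm (u : A) (m : M) := act (- u) m.

Lemma L_eval c y : eval_ch c y = pair c (delta y).
Proof. by rewrite /eval_ch /pair big_mkcond. Qed.

Lemma L_flat (g : seq A * M -> seq (seq A * M)) c Phi :
  pair (flatten (map g c)) Phi = pair c (fun x m => pair (g (x, m)) Phi).
Proof. by rewrite /pair big_flatten big_map; apply: eq_bigr => -[x m]. Qed.

Lemma eval_cat (c1 c2 : seq (seq A * M)) y : eval_ch (c1 ++ c2) y = eval_ch c1 y + eval_ch c2 y.
Proof. by rewrite /eval_ch big_cat. Qed.

Lemma bd_cat (c1 c2 : seq (seq A * M)) : bd act (c1 ++ c2) = bd act c1 ++ bd act c2.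
Proof. by rewrite /bd map_cat flatten_cat. Qed.

Lemma eval_mapc phi c y : (forall x y, phi (x + y) = phi x + phi y) ->
  eval_ch (mapc phi c) y = phi (eval_ch c y).
Proof. by move=> H; rewrite /eval_ch /mapc big_map (phi_sum _ H). Qed.

Lemma bd_mapc phi c : goodop phi -> bd act (mapc phi c) = mapc phi (bd act c).
Proof.
move=> [p1 p2]; rewrite /bd /mapc map_flatten -!map_comp; congr flatten.
apply: eq_map => -[x m] /=; rewrite /bd_term /=.
case: (size x) => [|n] //=; rewrite p2; congr (_ :: _).
rewrite map_cat -map_comp /=; congr (_ ++ _).
  by apply: eq_map => i /=; rewrite (sgn_fun _ _ _ _ p1).
by rewrite (sgn_fun _ _ _ _ p1).
Qed.

Lemma deg_mapc n phi c : chain_deg n (mapc phi c) = chain_deg n c.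
Proof. by rewrite /chain_deg /mapc all_map. Qed.

Lemma deg_cat n (c1 c2 : seq (seq A * M)) : chain_deg n (c1 ++ c2) = chain_deg n c1 && chain_deg n c2.
Proof. by rewrite /chain_deg all_cat. Qed.

Lemma deg_hc n b c : chain_deg n c -> chain_deg n.+1 (hc b c).
Proof.
move=> /allP H; apply/allP => p /flatten_mapP [q qin].
move=> /mapP [i _ ->] /=; rewrite size_ins.
by have := H q qin => /eqP ->.
Qed.

Lemma sum_iota_ord n (F : nat -> M) : \sum_(i <- iota 0 n) F i = \sum_(i < n) F i.
Proof. by rewrite -(big_mkord xpredT) /index_iota subn0. Qed.

Lemma DcDr Phi w m :
  (forall z b m, Phi z (act b m) = act b (Phi z m)) ->
  (forall z x y, Phi z (x + y) = Phi z x + Phi z y) ->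
  Dc Phi w m = Dr actm (fun z => Phi z m) w.
Proof.
move=> Ha Hd; case: w => [|u y]; first by rewrite /Dc /pair /bd_term /= big_nil.
rewrite /Dc /pair /bd_term.
change (size (u :: y)) with (size y).+1.
rewrite big_cons big_cat big_map big_seq1.
cbn [fst snd behead head].
rewrite Ha sum_iota_ord.
rewrite (_ : Dr actm (fun z => Phi z m) (u :: y) = actm u (Phi y m) + Tr (fun z => Phi z m) (u :: y)) //.
rewrite -/(size y) -Tr_idx; congr (_ + (_ + _)).
  by apply: eq_bigr => i _; rewrite (sgn_fun _ _ _ _ (Hd _)).
by rewrite (sgn_fun _ _ _ _ (Hd _)).
Qed.

Lemma HcHr b Phi x m : (forall z x y, Phi z (x + y) = Phi z x + Phi z y) ->
  Hc b Phi x m = Hr b (fun z => Phi z m) x.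
Proof.
move=> Hd; rewrite /Hc /pair big_map -Hr_idx; apply: eq_bigr => i _ /=.
by rewrite (sgn_fun _ _ _ _ (Hd _)).
Qed.

Lemma delta_act y z b m : delta y z (act b m) = act b (delta y z m).
Proof. by rewrite /delta; case: (z == y); rewrite ?act_0. Qed.

Lemma delta_add y z m1 m2 : delta y z (m1 + m2) = delta y z m1 + delta y z m2.
Proof. by rewrite /delta; case: (z == y); rewrite ?addr0. Qed.

Lemma actmD u m1 m2 : actm u (m1 + m2) = actm u m1 + actm u m2.
Proof. exact: actD. Qed.

Lemma Dr_add (psi : A -> M -> M) (f g : seq A -> M) x : (forall u m1 m2, psi u (m1 + m2) = psi u m1 + psi u m2) ->
  Dr psi (fun w => f w + g w) x = Dr psi f x + Dr psi g x.
Proof.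
move=> H; case: x => [|u y]; first by rewrite /= addr0.
rewrite /Dr H Tr_add; by rewrite addrACA.
Qed.

Lemma hom_id b c y :
  eval_ch (bd act (hc b c)) y + eval_ch (hc b (bd act c)) y = act (- b) (eval_ch c y) - eval_ch c y.
Proof.
rewrite !L_eval /bd /hc !L_flat.
rewrite /pair (phi_sum _ (actD (- b))) -big_split /= -sumrB.
apply: eq_bigr => -[x m] _ /=.
have E1 : pair (hterm b (x, m)) (fun x0 m0 => pair (bd_term act (x0, m0)) (delta y)) = Hr b (Dr actm (fun z => (delta y) z m)) x.
  rewrite -/(Hc b (Dc (delta y)) x m) HcHr; last first.
    move=> z x1 y1; rewrite !DcDr; try (by move=> *; rewrite delta_act); try (by move=> *; rewrite delta_add).
    rewrite -Dr_add; last exact: actmD.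
    by congr Dr; apply: FunctionalExtensionality.functional_extensionality => w; rewrite delta_add.
  congr Hr; apply: FunctionalExtensionality.functional_extensionality => z.
  rewrite DcDr //; [by move=> *; rewrite delta_act | by move=> *; rewrite delta_add].
have E2 : pair (bd_term act (x, m)) (fun x0 m0 => pair (hterm b (x0, m0)) (delta y)) = Dr actm (Hr b (fun z => (delta y) z m)) x.
  rewrite -/(Dc (Hc b (delta y)) x m) DcDr.
  - congr Dr; apply: FunctionalExtensionality.functional_extensionality => z.
    by rewrite HcHr // => *; rewrite delta_add.
  - move=> z b' m'; rewrite !HcHr; try (by move=> *; rewrite delta_add).
    rewrite -(Hr_morph _ _ _ (act b')); last exact: actD.
    by congr Hr; apply: FunctionalExtensionality.functional_extensionality => w; rewrite delta_act.
  - move=> z x1 y1; rewrite !HcHr; try (by move=> *; rewrite delta_add).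
    rewrite -Hr_add.
    by congr Hr; apply: FunctionalExtensionality.functional_extensionality => w; rewrite delta_add.
change (pair (hterm b (x, m)) (fun x0 m0 => pair (bd_term act (x0, m0)) (delta y)) + pair (bd_term act (x, m)) (fun x0 m0 => pair (hterm b (x0, m0)) (delta y)) = act (- b) (delta y x m) - delta y x m).
rewrite E1 E2 addrC homotopy; last exact: actmD.
by [].
Qed.


Lemma closed_sum (d : seq (seq A * M)) : (forall z, coinv_rel act B (eval_ch d z)) ->
  forall P : pred (seq A), coinv_rel act B (\sum_(p <- d | P p.1) p.2).
Proof.
move=> H P.
move: {2}(size d) (leqnn (size d)) => n.
elim: n d H => [|n IHn] [|p0 d'] H hsz //; try by rewrite big_nil; exact: D0.
set w := p0.1.
rewrite (bigID (fun p => p.1 == w)) /=; apply: DD.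
  case hw: (P w).
    rewrite (eq_bigl (fun p => p.1 == w)); first exact: H.
    by move=> p /=; case: eqP => [->|]; rewrite ?andbT ?andbF ?hw.
  rewrite big_pred0; first exact: D0.
  by move=> p /=; case: eqP => [->|]; rewrite ?andbT ?andbF ?hw.
rewrite (eq_bigl (fun p => (p.1 != w) && P p.1)); last by move=> p; rewrite andbC.
rewrite -big_filter_cond.
apply: IHn.
  move=> z; rewrite /eval_ch big_filter_cond.
  case: (eqVneq z w) => [->|hz].
    rewrite big_pred0; first exact: D0.
    by move=> p /=; case: (p.1 == w).
  rewrite (eq_bigl (fun p => p.1 == z)); first exact: H.
  by move=> p /=; case: (eqVneq p.1 z) => [->|]; rewrite ?hz ?andbF ?andbT.
rewrite /= /w eqxx /= size_filter.
apply: leq_trans (count_size _ _) _.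
by rewrite -ltnS.
Qed.


Lemma hc_D1 b d : (forall z, coinv_rel act B (eval_ch d z)) ->
  forall y, coinv_rel act B (eval_ch (hc b d) y).
Proof.
move=> H y; rewrite L_eval /hc L_flat /pair.
have E : forall x m, \sum_(p0 <- hterm b (x, m)) delta y p0.1 p0.2 = \sum_(i < size y)
   (if (i < (size x).+1)%N && (ins b i x == y) then sgn i m else 0).
  move=> x m; rewrite /hterm big_map.
  case: (eqVneq (size y) (size x).+1) => hs.
    rewrite hs sum_iota_ord; apply: eq_bigr => i _; rewrite ltn_ord /=.
    by rewrite /delta; case: ifP.
  rewrite big1; last first.
    move=> i _; rewrite /delta; case: eqP => // e.
    by rewrite -e size_ins eqxx in hs.
  rewrite big1 // => i _; case: eqP => [e|_]; last by rewrite andbF.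
  by rewrite -e size_ins eqxx in hs.
rewrite (eq_bigr _ (fun p _ => E p.1 p.2)).
rewrite exchange_big /=; apply: Dsum => i _.
rewrite -big_mkcond /= -(phi_sum _ (sgnD _ i)).
apply: Dsgn; exact: (closed_sum _ H (fun x => (i < (size x).+1)%N && (ins b i x == y))).
Qed.

Definition hsim n (u v : seq A -> M) :=
  exists e, chain_deg n.+1 e /\ forall y, coinv_rel act B (u y - v y - eval_ch (bd act e) y).

Lemma eval_nil y : eval_ch (bd act [::]) y = 0.
Proof. by rewrite /eval_ch big_nil. Qed.

Lemma hsim_refl n u : hsim n u u.
Proof. by exists [::]; split => // y; rewrite eval_nil subrr subr0; exact: D0. Qed.

Lemma hsim_ext n u v u' v' : hsim n u v -> (forall y, u y = u' y) -> (forall y, v y = v' y) -> hsim n u' v'.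
Proof. by move=> [e [he H]] h1 h2; exists e; split => // y; rewrite -h1 -h2. Qed.

Lemma hsim_add n u1 v1 u2 v2 : hsim n u1 v1 -> hsim n u2 v2 ->
  hsim n (fun y => u1 y + u2 y) (fun y => v1 y + v2 y).
Proof.
move=> [e1 [he1 H1]] [e2 [he2 H2]]; exists (e1 ++ e2); split; first by rewrite deg_cat he1 he2.
move=> y; rewrite bd_cat eval_cat.
have := DD _ _ _ (H1 y) (H2 y).
by have -> : u1 y + u2 y - (v1 y + v2 y) - (eval_ch (bd act e1) y + eval_ch (bd act e2) y) =
  u1 y - v1 y - eval_ch (bd act e1) y + (u2 y - v2 y - eval_ch (bd act e2) y) by zsolve.
Qed.

Lemma hsim_trans n u v w : hsim n u v -> hsim n v w -> hsim n u w.
Proof.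
move=> [e1 [he1 H1]] [e2 [he2 H2]]; exists (e1 ++ e2); split; first by rewrite deg_cat he1 he2.
move=> y; rewrite bd_cat eval_cat.
have := DD _ _ _ (H1 y) (H2 y).
by have -> : u y - w y - (eval_ch (bd act e1) y + eval_ch (bd act e2) y) =
  u y - v y - eval_ch (bd act e1) y + (v y - w y - eval_ch (bd act e2) y) by zsolve.
Qed.

Lemma hsim_map n phi u v : goodop phi -> hsim n u v -> hsim n (fun y => phi (u y)) (fun y => phi (v y)).
Proof.
move=> hphi [e [he H]]; exists (mapc phi e); split; first by rewrite deg_mapc.
move=> y; rewrite bd_mapc // eval_mapc; last exact: hphi.1.
rewrite -!(add_funN _ _ hphi.1) -!hphi.1.
by apply: Dop.
Qed.

Lemma hsim_act n b c : chain_deg n c -> (forall y, coinv_rel act B (eval_ch (bd act c) y)) ->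
  hsim n (fun y => act b (eval_ch c y)) (eval_ch c).
Proof.
move=> hd hcyc; exists (hc (- b) c); split; first exact: deg_hc.
move=> y.
have := hom_id (- b) c y; rewrite opprK => <-.
rewrite addrC addKr.
exact: hc_D1.
Qed.

Lemma hsim_S n r c : chain_deg n c -> (forall y, coinv_rel act B (eval_ch (bd act c) y)) ->
  forall j, hsim n (fun y => Sop r j (eval_ch c y)) (fun y => eval_ch c y *+ j).
Proof.
move=> hd hcyc; elim=> [|j IH].
  apply: hsim_ext; first exact: (hsim_refl n (fun _ => 0)).
    by move=> y; rewrite /Sop big_ord0.
  by move=> y; rewrite mulr0n.
apply: hsim_ext; first exact: (hsim_add _ _ _ _ _ IH (hsim_act _ (r *+ j) _ hd hcyc)).
  by move=> y; rewrite /Sop big_ord_recr.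
by move=> y; rewrite mulrSr.
Qed.

Lemma hsim_P n t c : chain_deg n c -> (forall y, coinv_rel act B (eval_ch (bd act c) y)) ->
  hsim n (fun y => Pl t (eval_ch c y)) (eval_ch c).
Proof.
elim: t c => [|r t IH] c hd hcyc /=; first exact: hsim_refl.
apply: (hsim_trans _ _ (fun y => Pl t (eval_ch c y))); last exact: IH.
set c' := mapc (Pl t) c.
have [p1 p2] := goodop_P t.
have hd' : chain_deg n c' by rewrite deg_mapc.
have hc' : forall y, coinv_rel act B (eval_ch (bd act c') y).
  move=> y; rewrite bd_mapc; last exact: goodop_P.
  rewrite eval_mapc //.
  by apply: Dop; [exact: goodop_P | exact: hcyc].
have E : forall y, eval_ch c' y = Pl t (eval_ch c y) by move=> y; rewrite eval_mapc.
apply: hsim_ext; first exact: (hsim_map _ _ _ _ goodop_inv (hsim_S _ r _ hd' hc' l)).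
  by move=> y; rewrite /= E.
by move=> y /=; rewrite -E; exact: invK.
Qed.

Theorem homology_iso n : homology_map_iso act (coinv_rel act B) (coinv_rel act predT) n.
Proof.
have [p1 p2] := goodop_P s.
split.
  move=> c [hd hcyc] [e [he H2]].
  have [e1 [he1 H]] := hsim_P _ s _ hd hcyc.
  exists (mapc (Pl s) e ++ mapc (fun m => - m) e1); split.
    by rewrite deg_cat !deg_mapc he he1.
  move=> y; rewrite bd_cat eval_cat !bd_mapc; [|exact: goodop_opp|exact: goodop_P].
  rewrite !eval_mapc //; last exact: opprD.
  have Y := K2 _ (H2 y).
  rewrite p1 (add_funN _ _ p1) in Y.
  have := DB _ _ _ Y (H y).
  by have -> : Pl s (eval_ch c y) - Pl s (eval_ch (bd act e) y) -
   (Pl s (eval_ch c y) - eval_ch c y - eval_ch (bd act e1) y) =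
   eval_ch c y - (Pl s (eval_ch (bd act e) y) + - eval_ch (bd act e1) y) by zsolve.
move=> c [hd hcyc].
exists (mapc (Pl s) c); split.
  split; first by rewrite deg_mapc.
  move=> y; rewrite bd_mapc; last exact: goodop_P.
  rewrite eval_mapc //; exact: K2.
exists [::]; split => // y.
rewrite eval_nil subr0 eval_mapc // -opprB; apply: DN; exact: K3.
Qed.

Theorem cohomology_iso n : cohomology_map_iso act (invariants act predT) (invariants act B) n.
Proof.
have [p1 p2] := goodop_P s.
split.
  move=> f hv hc; case: n hv hc => [|k] hv hc //.
  move=> [g [hg H]]; exists (fun w => Pl s (g w)); split.
    by move=> x hx; apply: K4; apply: hg.
  move=> x hx; rewrite dco_map; last exact: goodop_P.
  by rewrite -H // K5 //; apply: hv.
move=> f hv hc; exists (fun x => Pl s (f x)); split.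
  by move=> x hx; apply: K4; apply: hv.
split; first exact: (cocycle_map _ _ _ (goodop_P s) hc).
case: n hv hc => [|k] hv hc.
  case=> // _.
  have hA : invariants act predT (f [::]).
    move=> b _; have := hc [:: b] erefl.
    rewrite /dco /= big_ord0 addr0 /sgn /=.
    by move/eqP; rewrite subr_eq0 => /eqP.
  by rewrite K5 // subrr.
have [g [hg H]] := csim_P k s f hv hc.
exists (fun w => - g w); split.
  by move=> x hx; apply: Iop; [exact: goodop_opp | exact: hg].
move=> x hx; rewrite dco_map; last exact: goodop_opp.
by rewrite -H // opprB.
Qed.

End Main.


Theorem theorem1p5 (A : zmodType) (B : pred A) (l : nat)
    (M : zmodType) (act : A -> M -> M) :
  (0 < l)%N ->
  (* B is a subgroup of A *)
  0 \in B -> (forall x y, x \in B -> y \in B -> x - y \in B) ->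
  (* A/B is finite *)
  (exists s : seq A, forall a, exists2 b, b \in s & a - b \in B) ->
  (* A/B is l-torsion *)
  (forall a, a *+ l \in B) ->
  (* M is a Z[1/l]-module, i.e. multiplication by l is bijective on M *)
  bijective (fun m : M => m *+ l) ->
  (* act is an action of A on M by additive maps *)
  (forall a x y, act a (x + y) = act a x + act a y) ->
  (forall x, act 0 x = x) ->
  (forall a b x, act (a + b) x = act a (act b x)) ->
  forall n : nat,
    homology_map_iso act (coinv_rel act B) (coinv_rel act predT) n /\
    cohomology_map_iso act (invariants act predT) (invariants act B) n.
Proof.
move=> l0 B0 BB [s Hs] Hl [inv invK Kinv] actD act0 actM n.
split.
  apply: (@homology_iso A M act B l inv s) => //.
apply: (@cohomology_iso A M act B l inv s) => //.
Qed.
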